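(* Let $\varphi$ be an INF sentence over $\Sigma$. Then the symbolic INF propagator $S_\varphi$ describes the INF propagator $O_\varphi$: for every four-valued symbolic $\Sigma$-structure $\tilde\Phi$ over $\Sigma_s$ and every two-valued $\Sigma_s$-structure $E$, $S_\varphi(\tilde\Phi)(E)=O_\varphi(\tilde\Phi(E))$.
   Context: Vocabularies are finite sets of predicate symbols. Four-valued structures: truth values $\mathbf{t},\mathbf{f},\mathbf{u},\mathbf{i}$; inverse swaps $\mathbf{t},\mathbf{f}$ and fixes $\mathbf{u},\mathbf{i}$; truth order $\mathbf{f}\le_t\mathbf{u}\le_t\mathbf{t}$, $\mathbf{f}\le_t\mathbf{i}\le_t\mathbf{t}$; precision order $\mathbf{u}\le_p\mathbf{t}\le_p\mathbf{i}$, $\mathbf{u}\le_p\mathbf{f}\le_p\mathbf{i}$. A four-valued $\Sigma$-structure $\tilde I$ has domain $D$ and gives each $P/n\in\Sigma$ a map $D^n\to\{\mathbf{t},\mathbf{f},\mathbf{u},\mathbf{i}\}$. Formula values: atoms via the structure, $\neg$ by inverse, $\wedge,\forall$ by $\le_t$-glb, $\vee,\exists$ by $\le_t$-lub. Encoding: $\mathrm{tf}(\Sigma)=\{P^{ct}/n,P^{cf}/n\mid P/n\in\Sigma\}$; $\mathrm{tf}(\tilde I)$ is the two-valued $\mathrm{tf}(\Sigma)$-structure with $(P^{ct})^{\mathrm{tf}(\tilde I)}=\{\overline{d}\mid P^{\tilde I}(\overline{d})\ge_p\mathbf{t}\}$ and $(P^{cf})^{\mathrm{tf}(\tilde I)}=\{\overline{d}\mid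 P^{\tilde I}(\overline{d})\ge_p\mathbf{f}\}$; $\tilde I\mapsto\mathrm{tf}(\tilde I)$ is a bijection onto two-valued $\mathrm{tf}(\Sigma)$-structures with domain $D$. Formulas $\varphi^{ct},\varphi^{cf}$ over $\mathrm{tf}(\Sigma)$: $(P(\overline{x}))^{ct}=P^{ct}(\overline{x})$, $(P(\overline{x}))^{cf}=P^{cf}(\overline{x})$; $(\neg\varphi)^{ct}=\varphi^{cf}$, $(\neg\varphi)^{cf}=\varphi^{ct}$; $(\varphi\wedge\psi)^{ct}=\varphi^{ct}\wedge\psi^{ct}$, $(\varphi\wedge\psi)^{cf}=\varphi^{cf}\vee\psi^{cf}$; $(\varphi\vee\psi)^{ct}=\varphi^{ct}\vee\psi^{ct}$, $(\varphi\vee\psi)^{cf}=\varphi^{cf}\wedge\psi^{cf}$; $(\forall x\varphi)^{ct}=\forall x\varphi^{ct}$, $(\forall x\varphi)^{cf}=\exists x\varphi^{cf}$; $(\exists x\varphi)^{ct}=\exists x\varphi^{ct}$, $(\exists x\varphi)^{cf}=\forall x\varphi^{cf}$. Symbolic structures: a symbolic two-valued $\Sigma'$-structure $\Phi$ over $\Sigma_s$ assigns each $P/n\in\Sigma'$ a query $\{(x_1,\dots,x_n)\mid\chi\}$ with $\chi$ a formula over $\Sigma_s$; for a $\Sigma_s$-structure $E$, $\Phi(E)$ is the $\Sigma'$-structure with the same domain and $P^{\Phi(E)}=\{\overline{d}\mid E[\overline{x}/\overline{d}]\models\chi\}$; for a formula $\varphi$ over $\Sigma'$, $\Phi(\varphi)$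 replaces each atom $P(\overline{y})$ by $\chi[\overline{x}/\overline{y}]$. A four-valued symbolic $\Sigma$-structure over $\Sigma_s$ is a symbolic two-valued $\mathrm{tf}(\Sigma)$-structure $\tilde\Phi$ over $\Sigma_s$; $\tilde\Phi(E)$ is identified with the four-valued $\Sigma$-structure $\tilde I$ with $\mathrm{tf}(\tilde I)=\tilde\Phi(E)$. The union of queries of equal arity is $\{\overline{x}\mid\psi\}\cup\{\overline{y}\mid\chi\}=\{\overline{z}\mid\psi[\overline{x}/\overline{z}]\vee\chi[\overline{y}/\overline{z}]\}$ with $\overline{z}$ fresh. INF sentences: $\forall\overline{x}(\psi\supset L[\overline{x}])$ with $\psi$ having free variables among $\overline{x}$, $L$ one of $P(\overline{x}),\neg P(\overline{x})$. INF propagator $O_\varphi$: $O_\varphi(\tilde I)$ agrees with $\tilde I$ except $P^{O_\varphi(\tilde I)}(\overline{d})=\mathrm{lub}_{\le_p}\{\mathbf{t},P^{\tilde I}(\overline{d})\}$ (resp. with $\mathbf{f}$ for negative $L$) whenever $\tilde I[\overline{x}/\overline{d}](\psi)\ge_p\mathbf{t}$. Symbolic INF propagator: for $\varphi=\forall\overline{x}(\psi\supset P(\overline{x}))$, $S_\varphi(\tilde\Phi)$ assigns $(P^{ct})^{\tilde\Phi}\cup\{\overline{x}\mid\tilde\Phi(\psi^{ct})\}$ to $P^{ct}$ and the same queries as $\tilde\Phi$ to all other symbols; for $\varphi=\forall\overline{x}(\psi\supset\neg P(\overline{x}))$, it assigns $(P^{cf})^{\tilde\Phi}\cup\{\overline{x}\mid\tilde\Phi(\psi^{ct})\}$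 to $P^{cf}$ and copies the rest. *)

(* Defs.v *)
From mathcomp Require Import all_boot.
From Stdlib Require Import ClassicalEpsilon.
Set Implicit Arguments.
Unset Strict Implicit.
Unset Printing Implicit Defensive.

Record vocab := Vocab { sym : finType; ar : sym -> nat }.

Definition var := nat.

Inductive form (V : vocab) : Type :=
| Atom (P : sym V) (xs : (ar P).-tuple var)
| Neg (f : form V)
| And (f g : form V)
| Or (f g : form V)
| All (x : var) (f : form V)
| Ex (x : var) (f : form V).
Arguments Atom {V} P xs.
Arguments Neg {V} f.
Arguments And {V} f g.
Arguments Or {V} f g.
Arguments All {V} x f.
Arguments Ex {V} x f.

Fixpoint fv V (f : form V) : seq var :=
  match f with
  | Atom _ xs => tval xs
  | Neg g => fv g
  | And g h => fv g ++ fv h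
  | Or g h => fv g ++ fv h
  | All x g => [seq y <- fv g | y != x]
  | Ex x g => [seq y <- fv g | y != x]
  end.

Definition upd D (a : var -> D) (x : var) (d : D) : var -> D :=
  fun y => if y == x then d else a y.

(* simultaneous update a[x1/d1,...,xn/dn]; for a repeated variable the
   first occurrence wins (consistent with [qsubst] below). *)
Fixpoint upds D (a : var -> D) (xs : seq var) (ds : seq D) : var -> D :=
  match xs, ds with
  | x :: xs', d :: ds' => upd (upds a xs' ds') x d
  | _, _ => a
  end.

Definition struct2 (V : vocab) (D : Type) := forall P : sym V, (ar P).-tuple D -> Prop.

Fixpoint sat V D (E : struct2 V D) (a : var -> D) (f : form V) : Prop :=
  match f with
  | Atom P xs => E P (map_tuple a xs)
  | Neg g => ~ sat E a g
  | And g h => sat E a g /\ sat E a h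
  | Or g h => sat E a g \/ sat E a h
  | All x g => forall d : D, sat E (upd a x d) g
  | Ex x g => exists d : D, sat E (upd a x d) g
  end.

Inductive FV := Tt | Ff | Uu | Ii.

Definition inv (v : FV) : FV :=
  match v with Tt => Ff | Ff => Tt | Uu => Uu | Ii => Ii end.

Definition le_t (v w : FV) : Prop := v = w \/ v = Ff \/ w = Tt.
Definition le_p (v w : FV) : Prop := v = w \/ v = Uu \/ w = Ii.

Definition is_glb (le : FV -> FV -> Prop) (S : FV -> Prop) (v : FV) : Prop :=
  (forall w, S w -> le v w) /\ (forall v', (forall w, S w -> le v' w) -> le v' v).
Definition is_lub (le : FV -> FV -> Prop) (S : FV -> Prop) (v : FV) : Prop :=
  (forall w, S w -> le w v) /\ (forall v', (forall w, S w -> le w v') -> le v v').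

Definition glb_t (S : FV -> Prop) : FV := epsilon (inhabits Tt) (is_glb le_t S).
Definition lub_t (S : FV -> Prop) : FV := epsilon (inhabits Tt) (is_lub le_t S).
Definition lub_p (S : FV -> Prop) : FV := epsilon (inhabits Tt) (is_lub le_p S).

Definition struct4 (V : vocab) (D : Type) := forall P : sym V, (ar P).-tuple D -> FV.

Fixpoint fval V D (I : struct4 V D) (a : var -> D) (f : form V) : FV :=
  match f with
  | Atom P xs => I P (map_tuple a xs)
  | Neg g => inv (fval I a g)
  | And g h => glb_t (fun w => w = fval I a g \/ w = fval I a h)
  | Or g h => lub_t (fun w => w = fval I a g \/ w = fval I a h)
  | All x g => glb_t (fun w => exists d : D, w = fval I (upd a x d) g)
  | Ex x g => lub_t (fun w => exists d : D, w = fval I (upd a x d) g)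
  end.

(* The encoding tf: P^ct = inl P, P^cf = inr P.                         *)
Definition tf (V : vocab) : vocab :=
  @Vocab (sym V + sym V)%type
         (fun s => match s with inl P => ar P | inr P => ar P end).

Definition tf_struct V D (I : struct4 V D) : struct2 (tf V) D :=
  fun s => match s as s0 return (@ar (tf V) s0).-tuple D -> Prop with
           | inl P => fun ds => le_p Tt (I P ds)
           | inr P => fun ds => le_p Ff (I P ds)
           end.

Fixpoint ct V (f : form V) : form (tf V) :=
  match f with
  | Atom P xs => @Atom (tf V) (inl P) xs
  | Neg g => cf g
  | And g h => And (ct g) (ct h)
  | Or g h => Or (ct g) (ct h)
  | All x g => All x (ct g)
  | Ex x g => Ex x (ct g)
  end
with cf V (f : form V) : form (tf V) :=
  match f with
  | Atom P xs => @Atom (tf V) (inr P) xs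
  | Neg g => ct g
  | And g h => Or (cf g) (cf h)
  | Or g h => And (cf g) (cf h)
  | All x g => Ex x (cf g)
  | Ex x g => All x (cf g)
  end.

Definition fresh (l : seq var) : var := (foldr maxn 0 l).+1.

Fixpoint rename V (sigma : var -> var) (f : form V) : form V :=
  match f with
  | Atom P xs => Atom P (map_tuple sigma xs)
  | Neg g => Neg (rename sigma g)
  | And g h => And (rename sigma g) (rename sigma h)
  | Or g h => Or (rename sigma g) (rename sigma h)
  | All x g =>
      let y := fresh (map sigma (fv (All x g))) in
      All y (rename (fun z => if z == x then y else sigma z) g)
  | Ex x g =>
      let y := fresh (map sigma (fv (Ex x g))) in
      Ex y (rename (fun z => if z == x then y else sigma z) g)
  end.

(* the simultaneous substitution [xs/ys] (first occurrence wins) *)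
Definition qsubst (xs ys : seq var) : var -> var :=
  fun z => if z \in xs then nth z ys (index z xs) else z.

Record query (Vs : vocab) (n : nat) := Query { qvars : n.-tuple var; qbody : form Vs }.
Arguments Query {Vs n} qvars qbody.

Definition symstruct (V' Vs : vocab) := forall P : sym V', query Vs (ar P).

Definition symstruct_wf V' Vs (Phi : symstruct V' Vs) : Prop :=
  forall P, {subset fv (qbody (Phi P)) <= tval (qvars (Phi P))}.

Definition seval V' Vs D (Phi : symstruct V' Vs) (E : struct2 Vs D) : struct2 V' D :=
  fun P ds => forall a : var -> D,
      sat E (upds a (tval (qvars (Phi P))) (tval ds)) (qbody (Phi P)).

Fixpoint sapply V' Vs (Phi : symstruct V' Vs) (f : form V') : form Vs :=
  match f with
  | Atom P ys => rename (qsubst (tval (qvars (Phi P))) (tval ys)) (qbody (Phi P))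
  | Neg g => Neg (sapply Phi g)
  | And g h => And (sapply Phi g) (sapply Phi h)
  | Or g h => Or (sapply Phi g) (sapply Phi h)
  | All x g => All x (sapply Phi g)
  | Ex x g => Ex x (sapply Phi g)
  end.

Definition qunion Vs n (q1 q2 : query Vs n) : query Vs n :=
  let m := fresh (tval (qvars q1) ++ tval (qvars q2) ++ fv (qbody q1) ++ fv (qbody q2)) in
  let zs : n.-tuple var := [tuple m + val i | i < n] in
  Query zs (Or (rename (qsubst (tval (qvars q1)) (tval zs)) (qbody q1))
               (rename (qsubst (tval (qvars q2)) (tval zs)) (qbody q2))).

(* INF sentences  forall x (psi -> L[x]),  L = P(x) (pos) or ~P(x). *)
Record INF (V : vocab) := MkINF {
  inf_P : sym V;
  inf_pos : bool;
  inf_xs : (ar inf_P).-tuple var;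
  inf_psi : form V }.

Definition INF_sentence V (phi : INF V) : Prop :=
  uniq (tval (inf_xs phi)) /\ {subset fv (inf_psi phi) <= tval (inf_xs phi)}.

Definition O_inf V D (phi : INF V) (I : struct4 V D) : struct4 V D :=
  fun Q ds =>
    if excluded_middle_informative
         (Q = inf_P phi /\
          forall a : var -> D,
            le_p Tt (fval I (upds a (tval (inf_xs phi)) (tval ds)) (inf_psi phi)))
    then lub_p (fun w => w = (if inf_pos phi then Tt else Ff) \/ w = I Q ds)
    else I Q ds.

Definition S_inf V Vs (phi : INF V) (Phi : symstruct (tf V) Vs) : symstruct (tf V) Vs :=
  let P := inf_P phi in
  let q : query Vs (ar P) := Query (inf_xs phi) (sapply Phi (ct (inf_psi phi))) in
  if inf_pos phi
  then dfwith (T := fun s => query Vs (@ar (tf V) s)) Phi (i := inl P) (qunion (Phi (inl P)) q)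
  else dfwith (T := fun s => query Vs (@ar (tf V) s)) Phi (i := inr P) (qunion (Phi (inr P)) q).

(* Main.v *)
Require Import Defs.
From mathcomp Require Import all_boot.
From Stdlib Require Import ClassicalEpsilon Classical FunctionalExtensionality PropExtensionality.
Set Implicit Arguments.
Unset Strict Implicit.

Definition tb (v : FV) : bool := match v with Tt | Ii => true | _ => false end.
Definition fb (v : FV) : bool := match v with Ff | Ii => true | _ => false end.
Definition mk (a b : bool) : FV :=
  match a, b with true, true => Ii | true, false => Tt | false, true => Ff | false, false => Uu end.
Lemma mk_tb a b : tb (mk a b) = a. Proof. by case: a; case: b. Qed.
Lemma mk_fb a b : fb (mk a b) = b. Proof. by case: a; case: b. Qed.
Lemma FV_ext v w : tb v = tb w -> fb v = fb w -> v = w.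
Proof. by case: v; case: w. Qed.
Lemma le_pTt v : le_p Tt v <-> tb v.
Proof. by case: v; rewrite /le_p; split=> //; intuition discriminate. Qed.
Lemma le_pFf v : le_p Ff v <-> fb v.
Proof. by case: v; rewrite /le_p; split=> //; intuition discriminate. Qed.
Lemma le_tE v w : le_t v w <-> ((tb v ==> tb w) && (fb w ==> fb v)).
Proof. by case: v; case: w; rewrite /le_t; split=> //; intuition discriminate. Qed.
Lemma le_pE v w : le_p v w <-> ((tb v ==> tb w) && (fb v ==> fb w)).
Proof. by case: v; case: w; rewrite /le_p; split=> //; intuition discriminate. Qed.

Definition pb (P : Prop) : bool := if excluded_middle_informative P then true else false.
Lemma pbP (P : Prop) : pb P <-> P.
Proof. by rewrite /pb; case: excluded_middle_informative. Qed.

Lemma glb_tE S : glb_t S = mk (pb (forall w, S w -> tb w)) (pb (exists w, S w /\ fb w)).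
Proof.
have H : is_glb le_t S (mk (pb (forall w, S w -> tb w)) (pb (exists w, S w /\ fb w))).
  split.
  - move=> w Sw; apply/le_tE; rewrite mk_tb mk_fb; apply/andP; split; apply/implyP.
      by move/pbP; apply.
    by move=> fw; apply/pbP; exists w.
  - move=> v Hv; apply/le_tE; rewrite mk_tb mk_fb; apply/andP; split; apply/implyP.
      move=> tv; apply/pbP=> w Sw; by move: (proj1 (le_tE _ _) (Hv w Sw)) => /andP[/implyP ->].
    move/pbP=> [w [Sw fw]]; by move: (proj1 (le_tE _ _) (Hv w Sw)) => /andP[_ /implyP ->].
rewrite /glb_t; case: (epsilon_spec (inhabits Tt) (is_glb le_t S) (ex_intro _ _ H)).
set g := epsilon _ _ => g1 g2.
case: H => h1 h2.
have A := proj1 (le_tE _ _) (g2 _ h1); have B := proj1 (le_tE _ _) (h2 _ g1).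
move: A B; set m := mk _ _.
clearbody g m; clear g1 g2 h1 h2; by case: g; case: m.
Qed.

Lemma lub_tE S : lub_t S = mk (pb (exists w, S w /\ tb w)) (pb (forall w, S w -> fb w)).
Proof.
have H : is_lub le_t S (mk (pb (exists w, S w /\ tb w)) (pb (forall w, S w -> fb w))).
  split.
  - move=> w Sw; apply/le_tE; rewrite mk_tb mk_fb; apply/andP; split; apply/implyP.
      by move=> fw; apply/pbP; exists w.
    by move/pbP; apply.
  - move=> v Hv; apply/le_tE; rewrite mk_tb mk_fb; apply/andP; split; apply/implyP.
      move/pbP=> [w [Sw fw]]; move: (proj1 (le_tE _ _) (Hv w Sw)) => /andP[/implyP H _]; exact: H fw.
    move=> tv; apply/pbP=> w Sw; move: (proj1 (le_tE _ _) (Hv w Sw)) => /andP[_ /implyP H]; exact: H tv.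
rewrite /lub_t; case: (epsilon_spec (inhabits Tt) (is_lub le_t S) (ex_intro _ _ H)).
set g := epsilon _ _ => g1 g2.
case: H => h1 h2.
have A := proj1 (le_tE _ _) (g2 _ h1); have B := proj1 (le_tE _ _) (h2 _ g1).
move: A B; set m := mk _ _.
clearbody g m; clear g1 g2 h1 h2; by case: g; case: m.
Qed.

Lemma lub_pE S : lub_p S = mk (pb (exists w, S w /\ tb w)) (pb (exists w, S w /\ fb w)).
Proof.
have H : is_lub le_p S (mk (pb (exists w, S w /\ tb w)) (pb (exists w, S w /\ fb w))).
  split.
  - move=> w Sw; apply/le_pE; rewrite mk_tb mk_fb; apply/andP; split; apply/implyP.
      by move=> fw; apply/pbP; exists w.
    by move=> fw; apply/pbP; exists w.
  - move=> v Hv; apply/le_pE; rewrite mk_tb mk_fb; apply/andP; split; apply/implyP.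
      move/pbP=> [w [Sw fw]]; move: (proj1 (le_pE _ _) (Hv w Sw)) => /andP[/implyP H _]; exact: H fw.
    move/pbP=> [w [Sw fw]]; move: (proj1 (le_pE _ _) (Hv w Sw)) => /andP[_ /implyP H]; exact: H fw.
rewrite /lub_p; case: (epsilon_spec (inhabits Tt) (is_lub le_p S) (ex_intro _ _ H)).
set g := epsilon _ _ => g1 g2.
case: H => h1 h2.
have A := proj1 (le_pE _ _) (g2 _ h1); have B := proj1 (le_pE _ _) (h2 _ g1).
move: A B; set m := mk _ _.
clearbody g m; clear g1 g2 h1 h2; by case: g; case: m.
Qed.

Lemma fval_ct V D (I : struct4 V D) (f : form V) : forall a,
  (tb (fval I a f) <-> sat (tf_struct I) a (ct f)) /\
  (fb (fval I a f) <-> sat (tf_struct I) a (cf f)).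
Proof.
elim: f => [P xs|g IH|g IHg h IHh|g IHg h IHh|x g IH|x g IH] a /=.
- by split; [apply: iff_sym; apply: le_pTt | apply: iff_sym; apply: le_pFf].
- by case: (IH a); case: (fval I a g) => /=.
- rewrite glb_tE mk_tb mk_fb; case: (IHg a) => [g1 g2]; case: (IHh a) => [h1 h2].
  split; rewrite pbP.
    split; first by move=> H; split; [apply/g1/H|apply/h1/H]; auto.
    by move=> [/g1 ? /h1 ?] w [->|->].
  split; first by move=> [w [[->|->] ?]]; [left; apply/g2|right; apply/h2].
  move=> [/g2 H|/h2 H]; [exists (fval I a g) | exists (fval I a h)]; tauto.
- rewrite lub_tE mk_tb mk_fb; case: (IHg a) => [g1 g2]; case: (IHh a) => [h1 h2].
  split; rewrite pbP.
    split; first by move=> [w [[->|->] ?]]; [left; apply/g1|right; apply/h1].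
    move=> [/g1 H|/h1 H]; [exists (fval I a g) | exists (fval I a h)]; tauto.
  split; first by move=> H; split; [apply/g2/H|apply/h2/H]; auto.
  by move=> [/g2 ? /h2 ?] w [->|->].
- rewrite glb_tE mk_tb mk_fb; split; rewrite pbP.
    split; first by move=> H d; apply/(proj1 (IH _)); apply: H; exists d.
    by move=> H w [d ->]; apply/(proj1 (IH _)).
  split; first by move=> [w [[d ->] ?]]; exists d; apply/(proj2 (IH _)).
  by move=> [d /(proj2 (IH _)) ?]; eexists; split; [exists d; reflexivity|].
- rewrite lub_tE mk_tb mk_fb; split; rewrite pbP.
    split; first by move=> [w [[d ->] ?]]; exists d; apply/(proj1 (IH _)).
    by move=> [d /(proj1 (IH _)) ?]; eexists; split; [exists d; reflexivity|].
  split; first by move=> H d; apply/(proj2 (IH _)); apply: H; exists d.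
  by move=> H w [d ->]; apply/(proj2 (IH _)).
Qed.


Lemma fresh_gt (l : seq var) x : x \in l -> x < fresh l.
Proof.
rewrite /fresh ltnS; elim: l => //= y l IH; rewrite inE => /orP[/eqP->|/IH H].
  by rewrite leq_maxl.
by rewrite (leq_trans H) ?leq_maxr.
Qed.

Lemma fresh_neq (l : seq var) x : x \in l -> x != fresh l.
Proof. by move/fresh_gt; rewrite ltn_neqAle => /andP[]. Qed.

Lemma sat_coinc V D (E : struct2 V D) (f : form V) : forall a b,
  {in fv f, a =1 b} -> (sat E a f <-> sat E b f).
Proof.
elim: f => [P xs|g IH|g IHg h IHh|g IHg h IHh|x g IH|x g IH] a b /= Hab.
- have -> : map_tuple a xs = map_tuple b xs by apply: val_inj => /=; apply/eq_in_map.
  by [].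
- by rewrite (IH a b Hab).
- have H1 : {in fv g, a =1 b} by move=> z zf; apply: Hab; rewrite mem_cat zf.
  have H2 : {in fv h, a =1 b} by move=> z zf; apply: Hab; rewrite mem_cat zf orbT.
  by rewrite (IHg _ _ H1) (IHh _ _ H2).
- have H1 : {in fv g, a =1 b} by move=> z zf; apply: Hab; rewrite mem_cat zf.
  have H2 : {in fv h, a =1 b} by move=> z zf; apply: Hab; rewrite mem_cat zf orbT.
  by rewrite (IHg _ _ H1) (IHh _ _ H2).
- have H d : {in fv g, upd a x d =1 upd b x d}.
    move=> z zf; rewrite /upd; case: eqP => // /eqP zx; apply: Hab.
    by rewrite mem_filter zx.
  by split=> K d; [apply/(IH _ _ (H d))|apply/(IH _ _ (H d))].
- have H d : {in fv g, upd a x d =1 upd b x d}.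
    move=> z zf; rewrite /upd; case: eqP => // /eqP zx; apply: Hab.
    by rewrite mem_filter zx.
  by split=> [[d K]|[d K]]; exists d; [apply/(IH _ _ (H d))|apply/(IH _ _ (H d))].
Qed.

Lemma sat_rename V D (E : struct2 V D) (f : form V) : forall sigma a,
  sat E a (rename sigma f) <-> sat E (a \o sigma) f.
Proof.
elim: f => [P xs|g IH|g IHg h IHh|g IHg h IHh|x g IH|x g IH] sigma a /=.
- have -> : map_tuple a (map_tuple sigma xs) = map_tuple (a \o sigma) xs.
    by apply: val_inj => /=; rewrite map_comp.
  by [].
- by rewrite IH.
- by rewrite IHg IHh.
- by rewrite IHg IHh.
- set y := fresh _.
  have H d : {in fv g, upd a y d \o (fun z => if z == x then y else sigma z) =1 upd (a \o sigma) x d}.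
    move=> z zf; rewrite /upd /=; case: (z =P x) => [_|/eqP zx]; first by rewrite eqxx.
    case: ifP => // /eqP E1; exfalso.
    have : sigma z \in map sigma [seq y <- fv g | y != x] by apply: map_f; rewrite mem_filter zx.
    by move/fresh_neq; rewrite -/y E1 eqxx.
  split=> K d; have := K d; rewrite IH; apply sat_coinc => // z zf; by rewrite (H d z zf).
- set y := fresh _.
  have H d : {in fv g, upd a y d \o (fun z => if z == x then y else sigma z) =1 upd (a \o sigma) x d}.
    move=> z zf; rewrite /upd /=; case: (z =P x) => [_|/eqP zx]; first by rewrite eqxx.
    case: ifP => // /eqP E1; exfalso.
    have : sigma z \in map sigma [seq y <- fv g | y != x] by apply: map_f; rewrite mem_filter zx.
    by move/fresh_neq; rewrite -/y E1 eqxx.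
  split=> [[d K]|[d K]]; exists d; move: K; rewrite ?IH; apply sat_coinc => // z zf;
   by rewrite (H d z zf).
Qed.

Lemma upds_nth D (a : var -> D) xs ds z : z \in xs -> size xs = size ds ->
  upds a xs ds z = nth (a z) ds (index z xs).
Proof.
elim: xs ds => [|x xs IH] [|d ds] //= zin [] sz.
rewrite /upd; case: (z =P x) => [->|/eqP zx]; first by rewrite eqxx.
rewrite eq_sym (negbTE zx) /=; apply: IH => //.
by move: zin; rewrite inE (negbTE zx).
Qed.

Lemma upds_in D (a b : var -> D) xs ds z : z \in xs -> size xs = size ds ->
  upds a xs ds z = upds b xs ds z.
Proof.
move=> zin sz; rewrite !upds_nth //; apply: set_nth_default.
by rewrite -sz index_mem.
Qed.

Lemma upds_qsubst D (a b : var -> D) xs zs ds z : uniq zs -> z \in xs ->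
  size xs = size zs -> size zs = size ds ->
  upds a zs ds (qsubst xs zs z) = upds b xs ds z.
Proof.
move=> uz zin s1 s2; rewrite /qsubst zin.
have ki : index z xs < size zs by rewrite -s1 index_mem.
rewrite upds_nth ?mem_nth // index_uniq // upds_nth //; last by rewrite s1.
by apply: set_nth_default; rewrite -s2.
Qed.

Lemma query_rename Vs D (E : struct2 Vs D) (bd : form Vs) vs zs ds a a' :
  {subset fv bd <= vs} -> uniq zs -> size vs = size zs -> size zs = size ds ->
  sat E (upds a zs ds) (rename (qsubst vs zs) bd) <-> sat E (upds a' vs ds) bd.
Proof.
move=> wf uz s1 s2; rewrite sat_rename; apply: sat_coinc => z zf /=.
by apply: upds_qsubst => //; apply: wf.
Qed.

Lemma upds_indep Vs D (E : struct2 Vs D) (bd : form Vs) vs ds a a' :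
  {subset fv bd <= vs} -> size vs = size ds ->
  sat E (upds a vs ds) bd <-> sat E (upds a' vs ds) bd.
Proof.
move=> wf s; apply: sat_coinc => z zf; apply: upds_in => //; exact: wf.
Qed.

Lemma fv_rename V (f : form V) : forall sigma, {subset fv (rename sigma f) <= map sigma (fv f)}.
Proof.
elim: f => [P xs|g IH|g IHg h IHh|g IHg h IHh|x g IH|x g IH] sigma /=.
- by [].
- exact: IH.
- move=> z; rewrite !mem_cat map_cat mem_cat => /orP[/IHg|/IHh] ->; by rewrite ?orbT.
- move=> z; rewrite !mem_cat map_cat mem_cat => /orP[/IHg|/IHh] ->; by rewrite ?orbT.
- set y := fresh _ => z; rewrite mem_filter => /andP[zy /IH /mapP[w wf E]]; subst z.
  move: zy => /=; case: ifP => [_|/negbT wx _]; first by rewrite eqxx.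
  by apply: map_f; rewrite mem_filter wx.
- set y := fresh _ => z; rewrite mem_filter => /andP[zy /IH /mapP[w wf E]]; subst z.
  move: zy => /=; case: ifP => [_|/negbT wx _]; first by rewrite eqxx.
  by apply: map_f; rewrite mem_filter wx.
Qed.

Lemma fv_ct V (f : form V) : fv (ct f) = fv f /\ fv (cf f) = fv f.
Proof.
elim: f => [P xs|g IH|g [g1 g2] h [h1 h2]|g [g1 g2] h [h1 h2]|x g [g1 g2]|x g [g1 g2]] //=;
 try by case: IH.
all: by rewrite ?g1 ?g2 ?h1 ?h2.
Qed.

Section Sym.
Variables (V' Vs : vocab) (Phi : symstruct V' Vs) (D : Type) (E : struct2 Vs D).
Hypothesis wf : symstruct_wf Phi.

Lemma fv_sapply (f : form V') : {subset fv (sapply Phi f) <= fv f}.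
Proof.
elim: f => [P ys|g IH|g IHg h IHh|g IHg h IHh|x g IH|x g IH] /=.
- move=> z /fv_rename /mapP[w wf' ->]; rewrite /qsubst (wf wf') mem_nth //.
  have := index_mem w (qvars (Phi P)); rewrite (wf wf') size_tuple => H.
  by rewrite size_tuple.
- exact: IH.
- move=> z; rewrite !mem_cat => /orP[/IHg|/IHh] ->; by rewrite ?orbT.
- move=> z; rewrite !mem_cat => /orP[/IHg|/IHh] ->; by rewrite ?orbT.
- move=> z; rewrite !mem_filter => /andP[-> /IH]; by [].
- move=> z; rewrite !mem_filter => /andP[-> /IH]; by [].
Qed.

Lemma sat_sapply (f : form V') : forall a, sat E a (sapply Phi f) <-> sat (seval Phi E) a f.
Proof.
elim: f => [P ys|g IH|g IHg h IHh|g IHg h IHh|x g IH|x g IH] a /=.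
- rewrite /seval sat_rename /=.
  have sz : size (tval (qvars (Phi P))) = size (map a ys) by rewrite size_map !size_tuple.
  have K : sat E (a \o qsubst (qvars (Phi P)) ys) (qbody (Phi P)) <->
           sat E (upds a (qvars (Phi P)) (map a ys)) (qbody (Phi P)).
    apply: sat_coinc => z /wf zin /=; rewrite upds_nth // /qsubst zin (nth_map z) //.
    have := index_mem z (qvars (Phi P)); rewrite zin size_tuple => H.
    by rewrite size_tuple.
  rewrite K; split; last by apply.
  by move=> H a'; apply/(@upds_indep Vs D E _ _ _ a a' (@wf P) sz).
- by rewrite IH.
- by rewrite IHg IHh.
- by rewrite IHg IHh.
- by split=> H d; apply/IH; apply: H.
- by split=> [[d /IH H]|[d /IH H]]; exists d.
Qed.
End Sym.


Lemma qunion_sat Vs D (E : struct2 Vs D) n (q1 q2 : query Vs n) (ds : n.-tuple D) :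
  {subset fv (qbody q1) <= qvars q1} -> {subset fv (qbody q2) <= qvars q2} ->
  (forall a, sat E (upds a (qvars (qunion q1 q2)) ds) (qbody (qunion q1 q2))) <->
  (forall a, sat E (upds a (qvars q1) ds) (qbody q1)) \/
  (forall a, sat E (upds a (qvars q2) ds) (qbody q2)).
Proof.
move=> w1 w2; rewrite /qunion /=.
set m := fresh _.
set zs : n.-tuple var := [tuple m + val i | i < n].
have uz : uniq zs.
  rewrite /zs /= map_inj_uniq ?enum_uniq //.
  by move=> i j /addnI /val_inj.
have K1 a : sat E (upds a zs ds) (rename (qsubst (qvars q1) zs) (qbody q1)) <->
            sat E (upds a (qvars q1) ds) (qbody q1).
  by apply: query_rename => //; rewrite !size_tuple.
have K2 a : sat E (upds a zs ds) (rename (qsubst (qvars q2) zs) (qbody q2)) <->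
            sat E (upds a (qvars q2) ds) (qbody q2).
  by apply: query_rename => //; rewrite !size_tuple.
split.
- move=> H; case: (classic (exists a : var -> D, True)) => [[a0 _]|N].
    case: (H a0) => [/K1 Ha0|/K2 Ha0]; [left|right] => a.
      by apply/(@upds_indep Vs D E _ _ _ a a0 w1); rewrite ?size_tuple.
    by apply/(@upds_indep Vs D E _ _ _ a a0 w2); rewrite ?size_tuple.
  by left => a; exfalso; apply: N; exists a.
- by move=> [H|H] a; [left; apply/K1|right; apply/K2]; apply: H.
Qed.

Unset Implicit Arguments.
Set Strict Implicit.

Theorem proposition5p7 (V Vs : vocab) (phi : INF V) (Phi : symstruct (tf V) Vs)
  (D : Type) (E : struct2 Vs D) :
  INF_sentence phi -> symstruct_wf Phi ->
  forall I : struct4 V D,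
    tf_struct I = seval Phi E ->
    tf_struct (O_inf phi I) = seval (S_inf phi Phi) E.
Proof.
case: phi => P pos xs psi [/= uxs wfpsi] wfPhi I HI.
have Ciff ds : (forall a, le_p Tt (fval I (upds a xs ds) psi)) <->
               (forall a, sat E (upds a xs ds) (sapply Phi (ct psi))).
  split=> H a; have := H a.
    by move/le_pTt/(proj1 (fval_ct _ _ _)); rewrite HI => /(sat_sapply E wfPhi).
  by move/(sat_sapply E wfPhi); rewrite -HI => /(proj1 (fval_ct _ _ _)) /le_pTt.
have wfq : {subset fv (sapply Phi (ct psi)) <= xs}.
  by move=> z /(fv_sapply wfPhi); rewrite (proj1 (fv_ct psi)) => /wfpsi.
apply: functional_extensionality_dep => s; apply: functional_extensionality => ds.
apply: propositional_extensionality.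
have Hs : tf_struct I (P:=s) ds = seval Phi E (P:=s) ds by rewrite HI.
rewrite /S_inf /O_inf /=.
case: s ds Hs => [Q|Q] ds /= Hs.
- move: ds Hs; case: (eqVneq P Q) => [<-|nPQ] ds Hs.
  + case: pos Hs => Hs.
    * rewrite /seval dfwith_in.
      rewrite (@qunion_sat Vs D E (ar P) (Phi (inl P)) (Query xs (sapply Phi (ct psi))) ds (@wfPhi (inl P)) wfq).
      case: excluded_middle_informative => [[_ C]|nC] /=.
        split=> _; last by rewrite le_pTt lub_pE mk_tb; apply/pbP; exists Tt; split; [left|].
        by right; apply/Ciff.
      rewrite Hs /seval; split=> [H|[H|H]]; [by left|by []|].
      by exfalso; apply: nC; split=> //; apply/Ciff.
    * rewrite /seval dfwith_out //.
      case: excluded_middle_informative => [[_ C]|nC] /=; last by rewrite Hs.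
      transitivity (le_p Tt (I P ds)); last by rewrite Hs.
      rewrite !le_pTt lub_pE mk_tb; split; first by move/pbP=> [w [[->|->] ?]].
      by move=> H; apply/pbP; exists (I P ds); split; [right|].
  + case: excluded_middle_informative => [[QP _]|nC] /=.
      by rewrite QP eqxx in nPQ.
    by case: pos; rewrite /seval dfwith_out ?Hs //; apply: contra_neq nPQ => -[].
- move: ds Hs; case: (eqVneq P Q) => [<-|nPQ] ds Hs.
  + case: pos Hs => Hs.
    * rewrite /seval dfwith_out //.
      case: excluded_middle_informative => [[_ C]|nC] /=; last by rewrite Hs.
      transitivity (le_p Ff (I P ds)); last by rewrite Hs.
      rewrite !le_pFf lub_pE mk_fb; split; first by move/pbP=> [w [[->|->] ?]].
      by move=> H; apply/pbP; exists (I P ds); split; [right|].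
    * rewrite /seval dfwith_in.
      rewrite (@qunion_sat Vs D E (ar P) (Phi (inr P)) (Query xs (sapply Phi (ct psi))) ds (@wfPhi (inr P)) wfq).
      case: excluded_middle_informative => [[_ C]|nC] /=.
        split=> _; last by rewrite le_pFf lub_pE mk_fb; apply/pbP; exists Ff; split; [left|].
        by right; apply/Ciff.
      rewrite Hs /seval; split=> [H|[H|H]]; [by left|by []|].
      by exfalso; apply: nC; split=> //; apply/Ciff.
  + case: excluded_middle_informative => [[QP _]|nC] /=.
      by rewrite QP eqxx in nPQ.
    by case: pos; rewrite /seval dfwith_out ?Hs //; apply: contra_neq nPQ => -[].
Qed.
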